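(* Let $A$ be an idempotent $\Gamma$-graded ring. For every $M\in A\text{-gr}$ the map $\chi_M:M\to A\cdot\mathrm{HOM}_A(A,M)$ defined by $\chi_M(m)(a)=am$ for $a\in A$ is a graded isomorphism in $A\text{-gr}$, and it is natural in $M$.
   Context: $\Gamma$ is a fixed multiplicative group. Rings are associative $\Gamma$-graded, not necessarily unital; $A$ is idempotent if $A^2=A$. A graded left $A$-module $M$ is unital if $AM=M$ and torsion-free if $Am=0$ implies $m=0$; $A\text{-gr}$ is the category of unital torsion-free graded left $A$-modules with degree-preserving $A$-linear maps. A left $A$-linear map $f:M\to N$ is graded of degree $\sigma$ if $f(M_\tau)\subseteq N_{\tau\sigma}$ for all $\tau$; $\mathrm{HOM}_A(M,N)=\bigoplus_\sigma \mathrm{HOM}_A(M,N)_\sigma$ is graded accordingly. $\mathrm{HOM}_A(A,M)$ is a graded left $A$-module via $(af)(x)=f(xa)$, and $A\cdot\mathrm{HOM}_A(A,M)$ is its submodule of finite sums $\sum a_if_i$. Naturality means: for a morphism $f:M\to N$ in $A\text{-gr}$, composing with $f$ maps $A\cdot\mathrm{HOM}_A(A,M)$ into $A\cdot\mathrm{HOM}_A(A,N)$ and $(f\circ -)\circ\chi_M=\chi_N\circ f$. *)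

(* Defs.v *)
From Stdlib Require List.
From HB Require Import structures.
From mathcomp Require Import all_boot all_algebra.
Set Implicit Arguments. Unset Strict Implicit. Unset Printing Implicit Defensive.
Import GRing.Theory.
Local Open Scope ring_scope.

Record mgroup := MGroup {
  gcar :> Type;
  gmul : gcar -> gcar -> gcar;
  gone : gcar;
  ginv : gcar -> gcar;
  gmulA : forall x y z, gmul x (gmul y z) = gmul (gmul x y) z;
  gmul1 : forall x, gmul gone x = x;
  gmulV : forall x, gmul (ginv x) x = gone }.

(* V = (+)_s D s : each D s an additive subgroup, every element a finite sum
   of homogeneous components, and homogeneous components of distinct degrees
   are independent. *)
Definition graded_decomp (G : mgroup) (V : zmodType) (D : G -> V -> Prop) : Prop :=
  (forall s, D s 0) /\
  (forall s x y, D s x -> D s y -> D s (x - y)) /\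
  (forall x : V, exists (l : seq G) (xs : G -> V),
      (forall s, List.In s l -> D s (xs s)) /\ x = \sum_(s <- l) xs s) /\
  (forall (l : seq G) (xs : G -> V), List.NoDup l ->
      (forall s, List.In s l -> D s (xs s)) -> \sum_(s <- l) xs s = 0 ->
      forall s, List.In s l -> xs s = 0).

Record grring (G : mgroup) := GrRing {
  rcar :> zmodType;
  rmul : rcar -> rcar -> rcar;
  rmulA : forall a b c, rmul a (rmul b c) = rmul (rmul a b) c;
  rmulDl : forall a b c, rmul (a + b) c = rmul a c + rmul b c;
  rmulDr : forall a b c, rmul a (b + c) = rmul a b + rmul a c;
  rdeg : G -> rcar -> Prop;
  rdeg_decomp : graded_decomp rdeg;
  rdeg_mul : forall s t a b, rdeg s a -> rdeg t b -> rdeg (gmul s t) (rmul a b) }.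

Record grmod (G : mgroup) (A : grring G) := GrMod {
  mcar :> zmodType;
  act : A -> mcar -> mcar;
  actDl : forall a b m, act (a + b) m = act a m + act b m;
  actDr : forall a m n, act a (m + n) = act a m + act a n;
  actA : forall a b m, act (rmul a b) m = act a (act b m);
  mdeg : G -> mcar -> Prop;
  mdeg_decomp : graded_decomp mdeg;
  mdeg_act : forall s t a m, rdeg s a -> mdeg t m -> mdeg (gmul s t) (act a m) }.

Section Defs.
Variables (G : mgroup) (A : grring G).

Definition idempotent_ring : Prop :=
  forall a : A, exists l : seq (A * A), a = \sum_(p <- l) rmul p.1 p.2.

Definition unital_mod (M : grmod A) : Prop :=
  forall m : M, exists l : seq (A * M), m = \sum_(p <- l) act p.1 p.2.

Definition torsion_free (M : grmod A) : Prop :=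
  forall m : M, (forall a : A, act a m = 0) -> m = 0.

Definition in_Agr (M : grmod A) : Prop := unital_mod M /\ torsion_free M.

Definition gr_morph (M N : grmod A) (f : M -> N) : Prop :=
  (forall x y, f (x + y) = f x + f y) /\
  (forall (a : A) x, f (act a x) = act a (f x)) /\
  (forall s x, mdeg s x -> mdeg s (f x)).

Variable M : grmod A.

Definition left_linear (f : A -> M) : Prop :=
  (forall x y, f (x + y) = f x + f y) /\
  (forall a x, f (rmul a x) = act a (f x)).

Definition hom_deg (s : G) (f : A -> M) : Prop :=
  left_linear f /\ forall (t : G) (x : A), rdeg t x -> mdeg (gmul t s) (f x).

Definition HOM (f : A -> M) : Prop :=
  exists l : seq (G * (A -> M)),
    (forall p, List.In p l -> hom_deg p.1 p.2) /\
    f = (fun x => \sum_(p <- l) p.2 x).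

Definition hom_act (a : A) (f : A -> M) : A -> M := fun x => f (rmul x a).

Definition AHOM (g : A -> M) : Prop :=
  exists l : seq (A * (A -> M)),
    (forall p, List.In p l -> HOM p.2) /\
    g = (fun x => \sum_(p <- l) hom_act p.1 p.2 x).

Definition AHOM_deg (s : G) (g : A -> M) : Prop := AHOM g /\ hom_deg s g.

Definition chi (m : M) : A -> M := fun a => act a m.

End Defs.

(* Main.v *)
Require Import Defs.
From Stdlib Require Import ClassicalEpsilon FunctionalExtensionality.
From Stdlib Require List.
From mathcomp Require Import all_boot all_algebra.
Set Implicit Arguments. Unset Strict Implicit. Unset Printing Implicit Defensive.
Import GRing.Theory.
Local Open Scope ring_scope.

Definition gdec (G : mgroup) (x y : G) : {x = y} + {x <> y} :=
  excluded_middle_informative (x = y).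

Lemma ginvK (G : mgroup) (t v : G) : gmul (ginv t) (gmul t v) = v.
Proof. by rewrite gmulA gmulV gmul1. Qed.

Lemma gmul_inj (G : mgroup) (t u v : G) : gmul t u = gmul t v -> u = v.
Proof. by move=> h; rewrite -(ginvK t u) h ginvK. Qed.

Lemma additive_sum (I : Type) (V W : zmodType) (phi : V -> W)
  (l : seq I) (F : I -> V) :
  (forall x y, phi (x + y) = phi x + phi y) ->
  phi (\sum_(i <- l) F i) = \sum_(i <- l) phi (F i).
Proof.
move=> hD; have h0 : phi 0 = 0.
  by apply/eqP; rewrite -(subrr (phi 0)) -{2}(addr0 0) hD addrK.
elim: l => [|i l IH]; first by rewrite !big_nil.
by rewrite !big_cons hD IH.
Qed.

Lemma additive_opp (V W : zmodType) (phi : V -> W) x :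
  (forall x y, phi (x + y) = phi x + phi y) -> phi (- x) = - phi x.
Proof.
move=> hD; have h0 : phi 0 = 0.
  by apply/eqP; rewrite -(subrr (phi 0)) -{2}(addr0 0) hD addrK.
have : phi (- x) + phi x = 0 by rewrite -hD addNr h0.
by move/eqP; rewrite addr_eq0 => /eqP.
Qed.

Lemma big_In_eq (I : Type) (V : zmodType) (l : seq I) (F F' : I -> V) :
  (forall i, List.In i l -> F i = F' i) ->
  \sum_(i <- l) F i = \sum_(i <- l) F' i.
Proof.
elim: l => [|i l IH] h; first by rewrite !big_nil.
rewrite !big_cons h /=; last by left.
by rewrite IH // => j hj; apply: h; right.
Qed.



Lemma sum_single (G : mgroup) (V : zmodType) (l : seq G) s (F : G -> V) :
  List.NoDup l -> List.In s l -> (forall v, List.In v l -> v <> s -> F v = 0) ->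
  \sum_(v <- l) F v = F s.
Proof.
elim: l => [|w l IH] hnd //= hin h.
have hnin : ~ List.In w l by inversion hnd.
have hnd' : List.NoDup l by inversion hnd.
rewrite big_cons; case: hin => [e|hin].
  subst w.
  rewrite (big_In_eq (F' := fun _ => 0)); first by rewrite big1 ?addr0.
  move=> v hv; apply: h; first by right.
  by move=> e; subst.
rewrite IH //; last by move=> v hv; apply: h; right.
rewrite h ?add0r //; first by left.
by move=> e; subst.
Qed.

Lemma D_add (G : mgroup) (V : zmodType) (D : G -> V -> Prop) :
  graded_decomp D -> forall s x y, D s x -> D s y -> D s (x + y).
Proof.
case=> h0 [hB _] s x y hx hy.
have := hB s x (0 - y) hx (hB s 0 y (h0 s) hy).
by rewrite add0r opprK.
Qed.

Lemma decomp_nodup (G : mgroup) (V : zmodType) (D : G -> V -> Prop) :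
  graded_decomp D -> forall (l : seq G) xs, (forall s, List.In s l -> D s (xs s)) ->
  exists l' ys, List.NoDup l' /\ (forall s, List.In s l' -> D s (ys s)) /\
    \sum_(s <- l) xs s = \sum_(s <- l') ys s.
Proof.
move=> hD; have [h0 _] := hD.
elim=> [|s l IH] xs hxs.
  by exists nil, xs; split; [constructor|split].
have [l' [ys [hnd [hys he]]]] := IH xs (fun v hv => hxs v (or_intror hv)).
have hs := hxs s (or_introl erefl).
case: (classic (List.In s l')) => hin.
  exists l', (fun v => if gdec v s then xs s + ys v else ys v); split => //; split.
    move=> v hv; destruct (gdec v s) as [e|ne]; last exact: hys.
    by subst; apply: D_add => //; apply: hys.
  rewrite big_cons he.
  rewrite [RHS](eq_bigr (fun v => ys v + (if gdec v s then xs s else 0))); last first.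
    by move=> v _; destruct (gdec v s); rewrite ?addr0 // addrC.
  rewrite big_split /= addrC; congr (_ + _).
  rewrite (sum_single (s := s)) //; first by destruct (gdec s s).
  by move=> v _ nv; destruct (gdec v s).
exists (s :: l'), (fun v => if gdec v s then xs s else ys v); split.
  by constructor.
split.
  move=> v [e|hv]; destruct (gdec v s) as [e'|ne] => //; subst => //; by apply: hys.
rewrite !big_cons he; destruct (gdec s s) => //; congr (_ + _).
by apply: big_In_eq => v hv; destruct (gdec v s) => //; subst.
Qed.

Lemma nodup_map_inj (T U : Type) (f : T -> U) (l : seq T) :
  (forall x y, f x = f y -> x = y) -> List.NoDup l -> List.NoDup (map f l).
Proof.
move=> hf; elim: l => [|x l IH] hnd /=; first by constructor.
have hnin : ~ List.In x l by inversion hnd.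
have hnd' : List.NoDup l by inversion hnd.
constructor; last exact: IH.
by move/List.in_map_iff => [y [/hf e hy]]; subst.
Qed.

Lemma act_sum_r (G : mgroup) (A : grring G) (M : grmod A) (a : A) (I : Type)
  (l : seq I) (F : I -> M) : act a (\sum_(i <- l) F i) = \sum_(i <- l) act a (F i).
Proof. by apply: additive_sum => x y; rewrite actDr. Qed.

Lemma act_sum_l (G : mgroup) (A : grring G) (M : grmod A) (m : M) (I : Type)
  (l : seq I) (F : I -> A) : act (\sum_(i <- l) F i) m = \sum_(i <- l) act (F i) m.
Proof. by apply: (additive_sum (phi := fun a => act a m)) => x y; rewrite actDl. Qed.

Lemma HOM_lin (G : mgroup) (A : grring G) (M : grmod A) (f : A -> M) :
  HOM f -> forall a x, f (rmul a x) = act a (f x).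
Proof.
move=> [l [hl ->]] a x; rewrite act_sum_r; apply: big_In_eq => p hp.
by have [[_ h] _] := hl p hp; apply: h.
Qed.

Lemma chi_HOM (G : mgroup) (A : grring G) (M : grmod A) (n : M) : HOM (chi n).
Proof.
have [_ [_ [hdec _]]] := mdeg_decomp M.
have [l [ns [hns ->]]] := hdec n.
exists (map (fun v => (v, chi (ns v))) l); split.
  move=> p /List.in_map_iff [v [<- hv]] /=; split; first split.
  - by move=> x y; rewrite /chi actDl.
  - by move=> a x; rewrite /chi actA.
  - by move=> t x hx; rewrite /chi; apply: mdeg_act => //; apply: hns.
apply: functional_extensionality => x.
by rewrite big_map /chi act_sum_r.
Qed.

Lemma chi_AHOM (G : mgroup) (A : grring G) (M : grmod A) (m : M) :
  unital_mod M -> AHOM (chi m).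
Proof.
move=> hu; have [l ->] := hu m.
exists (map (fun p => (p.1, chi p.2)) l); split.
  by move=> q /List.in_map_iff [p [<- _]]; apply: chi_HOM.
apply: functional_extensionality => x.
rewrite big_map /chi act_sum_r /hom_act /chi /=; apply: eq_bigr => p _; by rewrite actA.
Qed.

Lemma AHOM_surj (G : mgroup) (A : grring G) (M : grmod A) (g : A -> M) :
  AHOM g -> exists m : M, chi m = g.
Proof.
move=> [l [hl ->]]; exists (\sum_(p <- l) p.2 p.1).
apply: functional_extensionality => x.
rewrite /chi act_sum_r /hom_act; apply: big_In_eq => p hp.
by rewrite (HOM_lin (hl p hp)).
Qed.

Lemma deg_key (G : mgroup) (A : grring G) (M : grmod A) (m : M) (s : G) :
  torsion_free M -> (forall t x, rdeg t x -> mdeg (gmul t s) (act x m)) -> mdeg s m.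
Proof.
move=> tf hdeg.
have hD := mdeg_decomp M; have [h0 [hB [hdec hind]]] := hD.
have [l0 [ms0 [hms0 he0]]] := hdec m.
have [l1 [ms1 [hnd1 [hms1 he1]]]] := decomp_nodup hD hms0.
have [l [ms [hnd [hin [hms he]]]]] : exists l (ms : G -> M), List.NoDup l /\ List.In s l /\
   (forall v, List.In v l -> mdeg v (ms v)) /\ m = \sum_(v <- l) ms v.
  case: (classic (List.In s l1)) => hs.
    by exists l1, ms1; rewrite he0 he1.
  exists (s :: l1), (fun v => if gdec v s then 0 else ms1 v); split; first by constructor.
  split; first by left.
  split.
    by move=> v [e|hv]; destruct (gdec v s) as [e'|ne] => //; subst => //; apply: hms1.
  rewrite big_cons he0 he1; destruct (gdec s s) => //; rewrite add0r.
  by apply: big_In_eq => v hv; destruct (gdec v s) => //; subst.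
have hz : forall v, List.In v l -> v <> s -> ms v = 0.
  move=> v hv ns; apply: tf => x.
  have [_ [_ [hdecA _]]] := rdeg_decomp A.
  have [lx [xs [hxs ->]]] := hdecA x.
  rewrite act_sum_l (big_In_eq (F' := fun _ => 0)) ?big1 // => t ht.
  have hy := hxs t ht; move: (xs t) hy => y hy.
  pose ys := fun w => act y (ms (gmul (ginv t) w)) -
                      (if gdec w (gmul t s) then act y m else 0).
  have := hind (map (gmul t) l) ys (nodup_map_inj (@gmul_inj G t) hnd) _ _ (gmul t v).
  rewrite /ys ginvK; destruct (gdec (gmul t v) (gmul t s)) as [e|ne2].
    by case: ns; apply: gmul_inj e.
  rewrite subr0; apply.
  - move=> w /List.in_map_iff [u [<- hu]]; rewrite /ys ginvK; apply: hB.
      by apply: mdeg_act => //; apply: hms.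
    by destruct (gdec (gmul t u) (gmul t s)) as [e|ne3]; [simpl; rewrite e; apply: hdeg|apply: h0].
  - rewrite big_map /ys; under eq_bigr do rewrite ginvK.
  rewrite sumrB -act_sum_r -he (sum_single (s := s)) //.
    by destruct (gdec (gmul t s) (gmul t s)) => //; rewrite subrr.
  move=> u _ nu; destruct (gdec (gmul t u) (gmul t s)) as [e|ne3] => //.
  by case: nu; apply: gmul_inj e.
- by apply/List.in_map_iff; exists v.
rewrite he (sum_single (s := s)) //; exact: hms.
Qed.

Theorem proposition3p2 (G : mgroup) (A : grring G) :
  idempotent_ring A ->
  forall M : grmod A, in_Agr M ->
  (* chi_M lands in A . HOM_A(A,M) *)
  (forall m : M, AHOM (chi m)) /\
  (* chi_M is A-linear (for the module structure (a f)(x) = f(x a)) *)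
  (forall m n : M, chi (m + n) = (fun a => chi m a + chi n a)) /\
  (forall (b : A) (m : M), chi (act b m) = hom_act b (chi m)) /\
  (* bijective onto A . HOM_A(A,M) *)
  (forall m n : M, chi m = chi n -> m = n) /\
  (forall g : A -> M, AHOM g -> exists m : M, chi m = g) /\
  (* graded: degree-preserving, with degree-preserving inverse *)
  (forall (s : G) (m : M), mdeg s m -> AHOM_deg s (chi m)) /\
  (forall (s : G) (g : A -> M), AHOM_deg s g -> exists m : M, mdeg s m /\ chi m = g) /\
  (* naturality in M *)
  (forall N : grmod A, in_Agr N -> forall f : M -> N, gr_morph f ->
     (forall g : A -> M, AHOM g -> AHOM (fun x => f (g x))) /\
     (forall m : M, (fun x => f (chi m x)) = chi (f m))).
Proof.
move=> _ M [hu tf]; split; first by move=> m; apply: chi_AHOM.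
split.
  by move=> m n; apply: functional_extensionality => a; rewrite /chi actDr.
split.
  by move=> b m; apply: functional_extensionality => x; rewrite /chi /hom_act actA.
split.
  move=> m n e; apply/eqP; rewrite -subr_eq0; apply/eqP; apply: tf => a.
  have := congr1 (fun f => f a) e; rewrite /chi => h.
  rewrite actDr (additive_opp (phi := act a)) ?h ?subrr // => x y; exact: actDr.
split; first by move=> g; apply: AHOM_surj.
split.
  move=> s m hm; split; first exact: chi_AHOM.
  split; first split.
  - by move=> x y; rewrite /chi actDl.
  - by move=> a x; rewrite /chi actA.
  - by move=> t x hx; rewrite /chi; apply: mdeg_act.
split.
  move=> s g [hA [_ hd]]; have [m e] := AHOM_surj hA; exists m; split => //.
  by apply: deg_key tf _ => t x hx; have := hd t x hx; rewrite -e.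
move=> N hN f [fD [fA fdeg]]; split.
  move=> g [l [hl ->]].
  exists (map (fun p => (p.1, fun x => f (p.2 x))) l); split.
    move=> q0 /List.in_map_iff [p [<- hp]] /=.
    have [l' [hl' e']] := hl p hp.
    exists (map (fun q => (q.1, fun x => f (q.2 x))) l'); split.
      move=> r /List.in_map_iff [q [<- hq]] /=.
      have [[qD qA] qdeg] := hl' q hq; split; first split.
      - by move=> x y; rewrite qD fD.
      - by move=> a x; rewrite qA fA.
      - by move=> t x hx; apply: fdeg; apply: qdeg.
    apply: functional_extensionality => x; rewrite e' big_map.
    exact: additive_sum.
  apply: functional_extensionality => x; rewrite big_map /hom_act.
  exact: additive_sum.
by move=> m; apply: functional_extensionality => x; rewrite /chi fA.
Qed.
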